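(* Let $k\ge2$, $1\le m\le k-1$, and let $(k_1,\dots,k_m)$ be an ordered partition of $k$ into positive integers. Let $X_{k_1,\dots,k_m}$ be the set of $k$-admissible $m\times k$ matrices with entries in $\{0,\pm1\}$, having exactly one nonzero entry in each column and exactly $k_i$ nonzero entries in row $i$ for each $i$. Then $$\#X_{k_1,\dots,k_m}=2^{k-m}\prod_{i=1}^{m-1}\binom{k-\sum_{j=1}^{i-1}k_j-1}{k_i-1},$$ where the empty product is $1$ and the empty sum is $0$.
   Context: For $k\ge2$, a division $(\nu,\mu)$ of $\{1,\dots,k\}$ consists of $1\le m\le k-1$ and strictly increasing sequences $\nu_1<\dots<\nu_m$, $\mu_1<\dots<\mu_{k-m}$ in $\{1,\dots,k\}$ which are disjoint. Given a positive integer $q$, an $m\times k$ integer matrix $D=(d_{ij})$ is $(\nu,\mu)$-admissible if no column vanishes, the gcd of its entries is $1$, $d_{i\nu_j}=q\delta_{ij}$ for $1\le i,j\le m$, and $d_{i\mu_j}=0$ whenever $\mu_j<\nu_i$. $D$ is $k$-admissible if it is $(\nu,\mu)$-admissible for some division $(\nu,\mu)$ and some positive integer $q$. *)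

(* Defs.v *)
From mathcomp Require Import all_boot all_order all_algebra.
Set Implicit Arguments. Unset Strict Implicit. Unset Printing Implicit Defensive.
Import Order.TTheory GRing.Theory Num.Theory.
Local Open Scope ring_scope.

(* Indices are 0-based: rows 'I_m, columns 'I_k. *)

Definition division (k m : nat) (nu : 'I_m -> 'I_k) (mu : 'I_(k - m) -> 'I_k)
  : Prop :=
  [/\ (1 <= m <= k - 1)%N,
      (forall i j : 'I_m, (i < j)%N -> (nu i < nu j)%N),
      (forall i j : 'I_(k - m), (i < j)%N -> (mu i < mu j)%N) &
      (forall (i : 'I_m) (j : 'I_(k - m)), nu i != mu j)].

Definition gcd_entries (m k : nat) (D : 'M[int]_(m, k)) : int :=
  \big[gcdz/0]_(i < m) \big[gcdz/0]_(j < k) D i j.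

Definition numu_admissible (k m : nat) (nu : 'I_m -> 'I_k)
  (mu : 'I_(k - m) -> 'I_k) (q : int) (D : 'M[int]_(m, k)) : Prop :=
  [/\ 0 < q,
      (forall j : 'I_k, exists i : 'I_m, D i j != 0),
      gcd_entries D = 1,
      (forall i j : 'I_m, D i (nu j) = q * (i == j)%:R) &
      (forall (i : 'I_m) (j : 'I_(k - m)), (mu j < nu i)%N -> D i (mu j) = 0)].

Definition k_admissible (k m : nat) (D : 'M[int]_(m, k)) : Prop :=
  exists (nu : 'I_m -> 'I_k) (mu : 'I_(k - m) -> 'I_k) (q : int),
    division nu mu /\ numu_admissible nu mu q D.

(* The set X_{k_1,...,k_m} (membership predicate); kk i is the part k_{i+1} *)
Definition in_X {k m : nat} (kk : nat -> nat) (D : 'M[int]_(m, k)) : Prop :=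
  [/\ k_admissible D,
      (forall i j, D i j \in [:: 0; 1; -1]),
      (forall j : 'I_k, #|[set i : 'I_m | D i j != 0]| = 1%N) &
      (forall i : 'I_m, #|[set j : 'I_k | D i j != 0]| = kk i)].

(* Main.v *)
Require Import Defs.
From mathcomp Require Import all_boot all_order all_algebra.
From mathcomp Require Import zify ring.
Set Implicit Arguments. Unset Strict Implicit. Unset Printing Implicit Defensive.

Notation sgl := (nat * bool)%type.

Fixpoint masks (n r : nat) : seq bitseq :=
  match n with
  | 0 => if r == 0 then [:: [::]] else [::]
  | n'.+1 => (if r is r'.+1 then map (cons true) (masks n' r') else [::])
               ++ map (cons false) (masks n' r)
  end.

Fixpoint allbits (n : nat) : seq bitseq :=
  if n is n'.+1 then map (cons true) (allbits n') ++ map (cons false) (allbits n')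
  else [:: [::]].

Lemma size_allbits n : size (allbits n) = 2 ^ n.
Proof. elim: n => //= n IH; rewrite size_cat !size_map IH expnS; lia. Qed.

Lemma mem_allbits n b : (b \in allbits n) = (size b == n).
Proof.
elim: n b => [|n IH] b.
  by case: b.
have -> : allbits n.+1 = map (cons true) (allbits n) ++ map (cons false) (allbits n) by [].
rewrite mem_cat; case: b => [|x b] /=.
  by apply/negbTE/negP => /orP [] /mapP [].
have H1 : forall y, (x :: b \in map (cons y) (allbits n)) = (x == y) && (size b == n).
  move=> y; apply/mapP/andP => [[z hz [-> ->]]|[/eqP -> /eqP hb]]; first by rewrite -IH.
  by exists b; rewrite ?IH ?hb.
rewrite !H1 eqSS; by case: x {H1}; case: (size b == n).
Qed.

Lemma uniq_allbits n : uniq (allbits n).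
Proof.
elim: n => //= n IH; rewrite cat_uniq !map_inj_uniq //; try by move=> ? ? [].
rewrite IH andbT /=; by apply/hasPn => z /mapP [y _ ->]; apply/negP => /mapP [? _ []].

Qed.

Lemma size_masks n r : size (masks n r) = 'C(n, r).
Proof.
elim: n r => [|n IH] [|r] //=; first by rewrite size_map IH !bin0.
by rewrite size_cat !size_map !IH binS addnC.
Qed.

Lemma mem_masks n r b : (b \in masks n r) = (size b == n) && (count id b == r).
Proof.
elim: n r b => [|n IH] r b.
  by case: r; case: b => //= x b; rewrite ?in_nil ?inE.
have -> : masks n.+1 r = (if r is r'.+1 then map (cons true) (masks n r') else [::])
               ++ map (cons false) (masks n r) by [].
rewrite mem_cat; case: b => [|x b].
  by apply/negbTE/negP => /orP [];[case: r => [|r] // /mapP [] | move/mapP => []].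
have H1 : forall y r', (x :: b \in map (cons y) (masks n r')) = (x == y) && (size b == n) && (count id b == r').
  move=> y r'; apply/mapP/andP => [[z hz [-> ->]]|[/andP [/eqP -> /eqP hb] hc]].
    by move: hz; rewrite IH => /andP [-> ->]; rewrite eqxx.
  by exists b; rewrite // IH hb hc eqxx.
case: r => [|r] /=; rewrite ?H1 eqSS; case: x {H1} => /=; rewrite ?andbF ?orbF //=;
  case: (size b == n) => //=; lia.

Qed.

Lemma uniq_masks n r : uniq (masks n r).
Proof.
elim: n r => [|n IH] [|r] //=; first by rewrite map_inj_uniq ?IH // => ? ? [].
rewrite cat_uniq !map_inj_uniq ?IH //=; try by move=> ? ? [].
by rewrite andbT; apply/hasPn => z /mapP [y _ ->]; apply/negP => /mapP [? _ []].
Qed.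

Fixpoint mrg (b : bitseq) (sg : bitseq) (w : seq sgl) : seq sgl :=
  match b with
  | [::] => [::]
  | true :: b' => (0, head true sg) :: mrg b' (behead sg) w
  | false :: b' => if w is x :: w' then (x.1.+1, x.2) :: mrg b' sg w' else [::]
  end.

Definition mk (t : seq sgl) : bitseq := [seq x.1 == 0 | x <- t].
Definition sgs (t : seq sgl) : bitseq := [seq x.2 | x <- t & x.1 == 0].
Definition del (t : seq sgl) : seq sgl := [seq (x.1.-1, x.2) | x <- t & x.1 != 0].
Definition fsts (t : seq sgl) : seq nat := map fst t.

Lemma merge_decomp t : mrg (mk t) (sgs t) (del t) = t.
Proof.
elim: t => //= [[[|n] s] t IH] /=; by rewrite IH.
Qed.

Section MergeProps.
Variables (b sg : bitseq) (w : seq sgl).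

Lemma merge_props : size sg = count id b -> size w = count negb b ->
  [/\ mk (mrg b sg w) = b, sgs (mrg b sg w) = sg, del (mrg b sg w) = w
    & size (mrg b sg w) = size b].
Proof.
elim: b sg w => [|x b' IH] sg' w' /=.
  by case: sg' => //; case: w'.
case: x => /= hs hw.
  case: sg' hs => //= s sg' [hs]; have [h1 h2 h3 h4] := IH _ _ hs hw.
  by rewrite /mk /sgs /del /= -/(mk _) -/(sgs _) -/(del _) h1 h2 h3 h4.
case: w' hw => //= y w' [hw]; have [h1 h2 h3 h4] := IH _ _ hs hw.
rewrite /mk /sgs /del /= -/(mk _) -/(sgs _) -/(del _) h1 h2 h3 h4.
by case: y.
Qed.
End MergeProps.

Lemma count_del i t : count_mem i (fsts (del t)) = count_mem i.+1 (fsts t).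
Proof. elim: t => //= [[[|n] s] t IH] /=; rewrite IH //. Qed.

Lemma count_mk t : count id (mk t) = count_mem 0 (fsts t).
Proof. elim: t => //= [[[|n] s] t IH] /=; rewrite IH //. Qed.

Lemma size_sgs t : size (sgs t) = count_mem 0 (fsts t).
Proof. elim: t => //= [[[|n] s] t IH] /=; rewrite IH //. Qed.

Lemma size_del t : size (del t) + count_mem 0 (fsts t) = size t.
Proof. elim: t => //= [[[|n] s] t IH] /=; rewrite -IH /del /=; rewrite -/(del _); lia. Qed.

Lemma index_del x y t :
  (index x.+1 (fsts t) < index y.+1 (fsts t)) = (index x (fsts (del t)) < index y (fsts (del t))).
Proof.
elim: t => //= [[[|n] s] t IH] /=; first by rewrite ltnS.
rewrite !eqSS; case: (n == x); case: (n == y) => //.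
Qed.

Lemma sign_del i t :
  (nth (0,true) t (index i.+1 (fsts t))).2 = (nth (0,true) (del t) (index i (fsts (del t)))).2.
Proof.
elim: t => [|[[|n] s] t IH] /=; first by [].
  by rewrite IH.
by rewrite eqSS; case: (n == i).
Qed.

Lemma all_del n t : all (fun x : sgl => x.1 < n.+1) t -> all (fun x : sgl => x.1 < n) (del t).
Proof. elim: t => //= [[[|k] s] t IH] /andP [h1 h2]; rewrite /del /= -/(del _) ?IH //=; by rewrite andbT -ltnS. Qed.

Lemma all_merge n b sg w : all (fun x : sgl => x.1 < n) w -> all (fun x : sgl => x.1 < n.+1) (mrg b sg w).
Proof.
elim: b sg w => //= [[|] b IH] sg w hw /=; first by rewrite IH.
case: w hw => //= y w /andP [h1 h2] /=; rewrite ltnS h1 IH //.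
Qed.

Definition Pw (c : seq nat) (w : seq sgl) : Prop :=
  [/\ size w = sumn c,
      all (fun x : sgl => x.1 < size c) w,
      forall i, i < size c -> count_mem i (fsts w) = nth 0 c i,
      forall i, i.+1 < size c -> index i (fsts w) < index i.+1 (fsts w) &
      forall i, i < size c -> (nth (0,true) w (index i (fsts w))).2].

Fixpoint gen (c : seq nat) : seq (seq sgl) :=
  if c is c0 :: c' then
    [seq (0,true) :: mrg p.1 p.2 w | w <- gen c',
       p <- [seq (b, s) | b <- masks (c0.-1 + sumn c') c0.-1, s <- allbits c0.-1]]
  else [:: [::]].

Lemma ch_idx (f : seq nat) n : (forall i, i.+1 < n -> index i f < index i.+1 f) ->
  forall i j, i < j < n -> index i f < index j f.
Proof.
move=> h i j /andP [hij hj]; elim: j hij hj => [|j IH] //.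
rewrite ltnS leq_eqVlt => /orP [/eqP -> /h //| hij hj].
apply: ltn_trans (IH hij (ltnW hj)) (h _ hj).
Qed.

Lemma gen_spec c : all (fun x => 0 < x) c -> forall w, (w \in gen c) <-> Pw c w.
Proof.
elim: c => [|c0 c' IH] /=.
  move=> _ w; rewrite inE; split => [/eqP ->|[hs _ _ _ _]]; first by split.
  by apply/eqP; apply/nilP; rewrite /nilp hs.
move=> /andP [hc0 hpos] w; have IH' := IH hpos.
split.
- move=> /allpairsP [[w' p] [/= hw' hp ->]].
  move: hp => /allpairsP [[b s] [/= hb hs ->]] /=.
  move: hb hs; rewrite mem_masks mem_allbits => /andP [/eqP hb1 /eqP hb2] /eqP hs1.
  have [hw1 hw2 hw3 hw4 hw5] := (IH' w').1 hw'.
  have hcnt : count id b + count negb b = size b := count_predC id b.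
  have [h1 h2 h3 h4] := merge_props (sg:=s) (w:=w') (b:=b) ltac:(lia) ltac:(lia).
  set u := mrg b s w' in h1 h2 h3 h4 *.
  split => /=.
  + rewrite h4 hb1; lia.
  + by rewrite all_merge.
  + case=> [|i] hi /=.
      by rewrite -count_mk h1 hb2; lia.
    by rewrite add0n -count_del h3 hw3.
  + case=> [|i] hi /=; first by [].
    by rewrite ltnS index_del h3 hw4.
  + case=> [|i] hi //=.
    by rewrite sign_del h3 hw5.
- move=> [hs ha hc hg hsg].
  case: w hs ha hc hg hsg => [|x t] hs ha hc hg hsg.
    by move: hs => /=; lia.
  have hx1 : x.1 = 0.
    case hx : x.1 => [|j] //.
    have := ch_idx hg (i:=0) (j:=j.+1).
    move: ha => /= /andP [hxa _]; rewrite hx in hxa.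
    by rewrite /= hx eqxx /= hxa => /(_ isT).
  have hx2 : x.2 by have := hsg 0 isT; rewrite /= hx1 eqxx.
  have hxe : x = (0, true) by destruct x as [a bb]; simpl in hx1, hx2; rewrite hx1 hx2.
  subst x; have hc0' := hc 0 isT; simpl in hc0'.
  have {}ha : all (fun x : sgl => x.1 < (size c').+1) t by case/andP: ha.
  apply/allpairsP; exists (del t, (mk t, sgs t)); split => /=; last first.
  + by rewrite merge_decomp.
  + apply/allpairsP; exists (mk t, sgs t); split => //=.
      rewrite mem_masks size_map count_mk; apply/andP; split; apply/eqP; move: hs => /=; lia.
    by rewrite mem_allbits size_sgs -hc0' add1n.
  + apply/IH'; split.
    * have := size_del t; move: hs => /=; lia.
    * exact: all_del.
    * move=> i hi; rewrite count_del; have := hc i.+1 hi; by rewrite /= add0n.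
    * move=> i hi; rewrite -index_del; have := hg i.+1 hi; by rewrite /= ltnS.
    * move=> i hi; rewrite -sign_del; have := hsg i.+1 hi; by [].
Qed.

Lemma size_gen c0 c' : size (gen (c0 :: c')) =
  size (gen c') * ('C(c0.-1 + sumn c', c0.-1) * 2 ^ c0.-1).
Proof. by rewrite /= !size_allpairs size_masks size_allbits. Qed.

Lemma uniq_gen c : all (fun x => 0 < x) c -> uniq (gen c).
Proof.
elim: c => [|c0 c' IH] //= /andP [hc0 hpos].
apply: allpairs_uniq; first exact: IH.
  apply: allpairs_uniq; [exact: uniq_masks | exact: uniq_allbits |].
  by move=> [? ?] [? ?] _ _ /= [-> ->].
move=> [w1 [b1 s1]] [w2 [b2 s2]] /allpairsP [[w1' p1] [/= hw1 hp1 [ea eb]]]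
  /allpairsP [[w2' p2] [/= hw2 hp2 [ec ed]]] /= [heq]; subst.
have gsz : forall w b s, w \in gen c' -> (b, s) \in [seq (b, s) | b <- masks (c0.-1 + sumn c') c0.-1, s <- allbits c0.-1] ->
   size s = count id b /\ size w = count negb b.
  move=> w b s /(gen_spec hpos) [hs _ _ _ _] /allpairsP [[b' s'] [/= hb hs' [-> ->]]].
  move: hb hs'; rewrite mem_masks mem_allbits => /andP [/eqP hb1 /eqP hb2] /eqP hs1.
  have hcnt : count id b' + count negb b' = size b' := count_predC id b'.
  split; lia.
have [e1 e2] := gsz _ _ _ hw1 hp1.
have [f1 f2] := gsz _ _ _ hw2 hp2.
have [h1 h2 h3 _] := merge_props e1 e2.
have [g1 g2 g3 _] := merge_props f1 f2.
have := congr1 mk heq; have := congr1 sgs heq; have := congr1 del heq.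
by rewrite h1 h2 h3 g1 g2 g3 => -> -> ->.
Qed.

Lemma sumn_ge_size c : all (fun x => 0 < x) c -> size c <= sumn c.
Proof. elim: c => //= x c IH /andP [hx hc]; have := IH hc; lia. Qed.

Lemma size_gen_formula c : all (fun x => 0 < x) c ->
  size (gen c) = 2 ^ (sumn c - size c) *
     \prod_(i < size c) 'C(sumn (drop i c) - 1, nth 0 c i - 1).
Proof.
elim: c => [|c0 c' IH] /=; first by rewrite big_ord0.
move=> /andP [hc0 hpos]; rewrite size_gen IH // big_ord_recl /=.
have hge := sumn_ge_size hpos.
have -> : c0 + sumn c' - (size c').+1 = (sumn c' - size c') + c0.-1 by lia.
have -> : c0 + sumn c' - 1 = c0.-1 + sumn c' by lia.
rewrite expnD subn1.
set A := 2 ^ _; set B := 2 ^ _; set P := \prod_(_ < _) _; set C := 'C(_, _).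
ring.
Qed.

Lemma sum_iota (kk : nat -> nat) n : sumn (map kk (iota 0 n)) = \sum_(i < n) kk i.
Proof. by rewrite sumnE big_map /= -(big_mkord xpredT) /index_iota subn0. Qed.

Lemma size_final k m (kk : nat -> nat) : 0 < m ->
  (forall i, i < m -> 0 < kk i) -> \sum_(i < m) kk i = k ->
  size (gen (map kk (iota 0 m))) =
    2 ^ (k - m) * \prod_(i < m.-1) 'C(k - \sum_(j < i) kk j - 1, kk i - 1).
Proof.
move=> hm hpos hsum.
set c := map kk (iota 0 m).
have hall : all (fun x => 0 < x) c.
  by apply/allP => x /mapP [i]; rewrite mem_iota add0n => /andP [_ /hpos h] ->.
rewrite size_gen_formula // /c size_map size_iota sum_iota hsum.
have hdrop : forall i, i <= m -> sumn (drop i c) = k - \sum_(j < i) kk j.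
  move=> i hi; rewrite -hsum -(sum_iota kk m) -/c.
  have := congr1 sumn (cat_take_drop i c).
  rewrite sumn_cat /c -map_take take_iota (minn_idPl hi) sum_iota; lia.
move: hdrop; rewrite /c; clear hall c => hdrop.
have hnth : forall i, i < m -> nth 0 (map kk (iota 0 m)) i = kk i.
  by move=> i hi; rewrite (nth_map 0) ?nth_iota ?size_iota.
case: m hm hpos hsum hdrop hnth => [|m'] // _ hpos hsum hdrop hnth.
rewrite big_ord_recr hdrop // hnth //.
have -> : k - \sum_(j < m') kk j = kk m'.
  by rewrite -hsum big_ord_recr /=; lia.
rewrite binn /= Monoid.mulm1; congr (_ * _); apply: eq_bigr => i _ /=.
rewrite hdrop; last by rewrite /=; have := ltn_ord i; lia.
by rewrite hnth //= ; have := ltn_ord i; lia.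
Qed.

Import Order.TTheory GRing.Theory Num.Theory.

Lemma card_cnt k (P : nat -> bool) : #|[set j : 'I_k | P j]| = count P (iota 0 k).
Proof.
rewrite cardsE -sum1_card -(big_mkord P (fun _ => 1)) sum1_count /index_iota subn0 //.
Qed.

Lemma cnt_sub (s t : seq nat) : uniq s -> uniq t -> {subset s <= t} -> count (mem s) t = size s.
Proof.
move=> us ut sst; rewrite -size_filter; apply: perm_size; apply: uniq_perm.
- exact: filter_uniq.
- exact: us.
- by move=> x; rewrite mem_filter andb_idr //; exact: sst.
Qed.

Lemma nth_fst (w : seq sgl) p : (nth (0,true) w p).1 = nth 0 (fsts w) p.
Proof.
case: (ltnP p (size w)) => hp; first by rewrite (nth_map (0,true)).
by rewrite !nth_default ?size_map.
Qed.

Lemma index_first (f : seq nat) p i : nth 0 f p = i -> index i f <= p.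
Proof.
move=> <-; case: (ltnP p (size f)) => hp; first exact: index_nth.
exact: leq_trans (index_size _ _) hp.
Qed.

Lemma count_nth (f : seq nat) i : count_mem i f = count (fun j => nth 0 f j == i) (iota 0 (size f)).
Proof. by rewrite -{1}(mkseq_nth 0 f) /mkseq count_map. Qed.

Lemma big_gcdz_dvd (T : eqType) (r : seq T) (F : T -> int) x :
  x \in r -> (\big[gcdz/0%R]_(i <- r) F i %| F x)%Z.
Proof.
elim: r => //= y r IH; rewrite inE big_cons => /orP [/eqP ->|/IH h].
  exact: dvdz_gcdl.
exact: dvdz_trans (dvdz_gcdr _ _) h.
Qed.

Lemma big_gcdz_ge0 (T : Type) (r : seq T) (F : T -> int) :
  (0 <= \big[gcdz/0%R]_(i <- r) F i)%R.
Proof. by case: r => [|y r]; rewrite ?big_nil ?big_cons. Qed.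

Lemma gcd_one m k (D : 'M[int]_(m, k)) i0 j0 : D i0 j0 = 1%R -> gcd_entries D = 1%R.
Proof.
move=> h; rewrite /gcd_entries.
have h1 : (\big[gcdz/0%R]_(i < m) \big[gcdz/0%R]_(j < k) D i j %| D i0 j0)%Z.
  apply: dvdz_trans (big_gcdz_dvd _ (mem_index_enum i0)) _.
  exact: big_gcdz_dvd (mem_index_enum j0).
move: h1; rewrite h dvdz1 => /eqP h2.
have := big_gcdz_ge0 (index_enum (ordinal m)) (fun i => \big[gcdz/0%R]_(j < k) D i j).
move=> /gez0_abs <-; by rewrite h2.
Qed.

Local Open Scope ring_scope.

Definition mat (m k : nat) (w : seq sgl) : 'M[int]_(m, k) :=
  \matrix_(i < m, j < k)
    (if (nth (0%N, true) w j).1 == i then (if (nth (0%N, true) w j).2 then 1 else -1) else 0).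

Lemma matA (k m : nat) (kk : nat -> nat) (w : seq sgl) (hm : (1 <= m <= k - 1)%N)
  (hpos : forall i, (i < m)%N -> (0 < kk i)%N) (hsum : (\sum_(i < m) kk i)%N = k) :
  Pw (map kk (iota 0 m)) w -> in_X kk (mat m k w).
Proof.
move=> [hs ha hc hg hsg].
rewrite size_map size_iota in ha hc hg hsg.
have hsz : size w = k by rewrite hs sum_iota.
set f := fsts w.
have hf : size f = k by rewrite size_map.
have hcnt : forall i, (i < m)%N -> count_mem i f = kk i.
  by move=> i hi; rewrite hc // (nth_map 0%N) ?size_iota // nth_iota.
have hin : forall i, (i < m)%N -> i \in f.
  move=> i hi; rewrite -has_pred1 has_count hcnt //; exact: hpos.
have hnu : forall i : 'I_m, (index (nat_of_ord i) f < k)%N by move=> i; rewrite -hf index_mem hin.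
have hlet : forall p, (nth 0%N f p < m)%N.
  move=> p; case: (ltnP p (size f)) => hp; last by rewrite nth_default //; case/andP: hm.
  rewrite /f size_map in hp; rewrite /f (nth_map (0%N, true)) //; exact: (all_nthP _ ha).
have hE : forall (i : 'I_m) (j : 'I_k), mat m k w i j =
    if nth 0%N f j == i then (if (nth (0%N, true) w j).2 then 1 else -1) else 0.
  by move=> i j; rewrite mxE nth_fst.
have hpiv : forall (i j : 'I_m), mat m k w i (Ordinal (hnu j)) = (i == j)%:R.
  move=> i j; rewrite hE /= nth_index ?hin //.
  have := hsg j (ltn_ord j) => ->.
  by rewrite (val_eqE j i) eq_sym; case: (i == j).
set piv := [seq index i f | i <- iota 0 m].
set ns := filter (predC (mem piv)) (iota 0 k).
have upiv : uniq piv.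
  rewrite map_inj_in_uniq ?iota_uniq // => x y; rewrite !mem_iota /= => hx hy hxy.
  by rewrite -(nth_index 0%N (hin _ hx)) hxy nth_index ?hin.
have hpivk : {subset piv <= iota 0 k}.
  move=> x /mapP [i]; rewrite mem_iota /= => hi ->; rewrite mem_iota /= -hf index_mem hin //.
have hns : size ns = (k - m)%N.
  rewrite size_filter; have := count_predC (mem piv) (iota 0 k).
  rewrite cnt_sub ?iota_uniq // size_iota size_map size_iota; lia.
have hmu : forall j : 'I_(k - m), (nth 0%N ns j < k)%N.
  move=> j; have : nth 0%N ns j \in ns by rewrite mem_nth // hns.
  by rewrite mem_filter mem_iota => /andP [_ /=].
have hmunp : forall j : 'I_(k - m), nth 0%N ns j \notin piv.
  move=> j; have : nth 0%N ns j \in ns by rewrite mem_nth // hns.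
  by rewrite mem_filter => /andP [].
have sns : sorted ltn ns by apply: sorted_filter; [exact: ltn_trans | exact: iota_ltn_sorted].
split.
- exists (fun i => Ordinal (hnu i)), (fun j => Ordinal (hmu j)), 1.
  split; split => //.
  + move=> i j hij /=; apply: (ch_idx hg); rewrite hij /=; exact: ltn_ord.
  + move=> i j hij /=; apply: (sorted_ltn_nth ltn_trans) => //; rewrite inE hns; exact: ltn_ord.
  + move=> i j; apply/eqP => /(congr1 val) /= heq.
    have := hmunp j; rewrite -heq; apply/negP/negPn/mapP; exists (nat_of_ord i) => //.
    by rewrite mem_iota /=.
  + move=> j; exists (Ordinal (hlet j)); rewrite hE /= eqxx; by case: ifP.
  + case/andP: hm => hm0 _; apply: (gcd_one (i0 := Ordinal hm0) (j0 := Ordinal (hnu (Ordinal hm0)))).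
    by rewrite hpiv eqxx.
  + by move=> i j; rewrite hpiv mul1r.
  + move=> i j /= hlt; rewrite hE; case: ifP => // /eqP h.
    have /= := index_first h; lia.
- by move=> i j; rewrite hE; case: ifP => _; [case: ifP|]; rewrite !inE.
- move=> j; apply/eqP/cards1P; exists (Ordinal (hlet j)); apply/setP => i; rewrite !inE hE.
  have -> : (i == Ordinal (hlet j)) = (nth 0%N f j == i) by rewrite eq_sym.
  by case: ifP => //; case: ifP.
- move=> i; rewrite -hcnt // count_nth hf -card_cnt; congr #|pred_of_set _|.
  by apply/setP => j; rewrite !inE hE; case: ifP => //; case: ifP.
Qed.

Lemma inc_inj n p (g : 'I_n -> 'I_p) : (forall i j : 'I_n, (i < j)%N -> (g i < g j)%N) -> injective g.
Proof.
move=> h x y e; apply: val_inj; case: (ltngtP x y) => // hxy.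
  by have := h _ _ hxy; rewrite e ltnn.
by have := h _ _ hxy; rewrite e ltnn.
Qed.

Lemma cover_div k m (nu : 'I_m -> 'I_k) (mu : 'I_(k - m) -> 'I_k) : division nu mu ->
  forall j : 'I_k, (exists i, nu i = j) \/ (exists j', mu j' = j).
Proof.
move=> [hm hnu hmu hdis] j.
set A := [set nu i | i : 'I_m]; set B := [set mu i | i : 'I_(k - m)].
have cA : #|A| = m by rewrite card_imset ?card_ord //; exact: inc_inj.
have cB : #|B| = (k - m)%N by rewrite card_imset ?card_ord //; exact: inc_inj.
have cAB : A :&: B = set0.
  apply/setP => x; rewrite !inE; apply/negP => /andP [/imsetP [i _ ->] /imsetP [j' _ e]].
  by have := hdis i j'; rewrite e eqxx.
have hU : A :|: B = [set: 'I_k].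
  apply/eqP; rewrite eqEcard subsetT cardsT card_ord cardsU cAB cards0 cA cB.
  lia.
have : j \in A :|: B by rewrite hU inE.
rewrite in_setU => /orP [/imsetP [i _ ->]|/imsetP [i _ ->]]; [left|right]; by exists i.
Qed.

Lemma matB (k m : nat) (kk : nat -> nat) (D : 'M[int]_(m, k)) (hm : (1 <= m <= k - 1)%N)
  (hpos : forall i, (i < m)%N -> (0 < kk i)%N) (hsum : (\sum_(i < m) kk i)%N = k) :
  in_X kk D -> exists w, Pw (map kk (iota 0 m)) w /\ D = mat m k w.
Proof.
move=> [[nu [mu [q [hdiv [hq hcolnz hgcd hnu hmu]]]]] hent hcol hrow].
have hm0 : (0 < m)%N by case/andP: hm.
have hk0 : (0 < k)%N by case/andP: hm; lia.
set i0 := Ordinal hm0; set j0 := Ordinal hk0.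
set r := fun j : 'I_k => odflt i0 [pick i | D i j != 0].
have hr : forall i j, (D i j != 0) = (i == r j).
  move=> i j; have /eqP/cards1P [x hx] := hcol j.
  have hx' : forall y, (D y j != 0) = (y == x).
    by move=> y; rewrite -in_set1 -hx inE.
  rewrite /r; case: pickP => [y hy|hn] /=.
    by rewrite hx'; move: hy; rewrite hx' => /eqP ->.
  by have := hn x; rewrite hx' eqxx.
set w := [seq (nat_of_ord (r j), D (r j) j == 1) | j <- enum 'I_k].
have hw : forall j : 'I_k, nth (0%N, true) w j = (nat_of_ord (r j), D (r j) j == 1).
  move=> j; rewrite (nth_map j0) ?size_enum_ord //.
  by have -> : nth j0 (enum 'I_k) j = j by apply: val_inj; rewrite /= nth_enum_ord.
have hsw : size w = k by rewrite size_map size_enum_ord.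
set f := fsts w.
have hf : size f = k by rewrite size_map.
have hfj : forall j : 'I_k, nth 0%N f j = r j by move=> j; rewrite -nth_fst hw.
have hq1 : q = 1.
  have := hent i0 (nu i0); rewrite hnu eqxx mulr1 !inE.
  case/orP => [/eqP h|/orP [/eqP -> //|/eqP h]]; move: hq; rewrite h //.
have hrnu : forall i, r (nu i) = i.
  by move=> i; apply/eqP; rewrite eq_sym -hr hnu eqxx hq1 mulr1 oner_neq0.
have hidx : forall i : 'I_m, index (nat_of_ord i) f = nu i.
  move=> i; apply/eqP; rewrite eqn_leq; apply/andP; split.
    by apply: index_first; rewrite hfj hrnu.
  rewrite leqNgt; apply/negP => hlt.
  have hlk : (index (nat_of_ord i) f < k)%N by apply: ltn_trans hlt _.
  have hinf : nat_of_ord i \in f by rewrite -index_mem hf.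
  have := nth_index 0%N hinf; rewrite (hfj (Ordinal hlk)) => /val_inj e.
  have : D i (Ordinal hlk) != 0 by rewrite hr e.
  case: (cover_div hdiv (Ordinal hlk)) => [[i' e']|[j' e']].
    move: e; rewrite -e' hrnu => ei; subst i'.
    by move: hlt; rewrite e' /= ltnn.
  by rewrite -e' hmu ?eqxx //= e'.
exists w; split.
- split.
  + by rewrite hsw sum_iota hsum.
  + by rewrite size_map size_iota; apply/allP => x /mapP [j _ ->]; exact: ltn_ord.
  + move=> i; rewrite size_map size_iota => hi.
    rewrite (nth_map 0%N) ?size_iota // nth_iota // add0n.
    rewrite -(hrow (Ordinal hi)) count_nth hf -card_cnt; congr #|pred_of_set _|.
    apply/setP => j; rewrite !inE hfj hr eq_sym //.
  + move=> i; rewrite size_map size_iota => hi.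
    rewrite (hidx (Ordinal (ltnW hi))) (hidx (Ordinal hi)).
    by case: hdiv => _ h _ _; apply: h.
  + move=> i; rewrite size_map size_iota => hi.
    by rewrite (hidx (Ordinal hi)) hw /= hrnu hnu eqxx hq1 mulr1.
- apply/matrixP => i j; rewrite mxE hw /=.
  case: (eqVneq (r j) i) => [<-|hne].
    have := hent (r j) j; have : D (r j) j != 0 by rewrite hr.
    by rewrite eqxx !inE => /negbTE -> /= /orP [/eqP ->|/eqP ->].
  have : D i j == 0 by rewrite -[_ == 0]negbK hr eq_sym (negbTE hne).
  move/eqP => ->; by rewrite (val_eqE (r j) i) (negbTE hne).
Qed.
Local Open Scope ring_scope.

Lemma mat_inj k m (w1 w2 : seq sgl) : size w1 = k -> size w2 = k ->
  all (fun x : sgl => (x.1 < m)%N) w1 -> mat m k w1 = mat m k w2 -> w1 = w2.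
Proof.
move=> h1 h2 ha e; apply: (eq_from_nth (x0 := (0%N, true))); first by rewrite h1 h2.
move=> p hp.
have hpk : (p < k)%N by rewrite -h1.
have hl : ((nth (0%N, true) w1 p).1 < m)%N by apply: (all_nthP _ ha).
have := congr1 (fun M : 'M[int]_(m, k) => M (Ordinal hl) (Ordinal hpk)) e; rewrite !mxE /= eqxx.
case: (nth (0%N, true) w1 p) => a1 b1; case: (nth (0%N, true) w2 p) => a2 b2 /=.
case: eqP => [->|_]; last by case: b1.
by case: b1; case: b2.
Qed.

Theorem proposition3p4 (k m : nat) (kk : nat -> nat)
  (hk : (2 <= k)%N) (hm : (1 <= m <= k - 1)%N)
  (hpos : forall i, (i < m)%N -> (0 < kk i)%N)
  (hsum : (\sum_(i < m) kk i)%N = k) :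
  exists s : seq 'M[int]_(m, k),
    [/\ uniq s,
        (forall D, in_X kk D <-> D \in s) &
        size s = (2 ^ (k - m) *
                  \prod_(i < m.-1) 'C(k - \sum_(j < i) kk j - 1, kk i - 1))%N].
Proof.
set c := map kk (iota 0 m).
have hall : all (fun x => 0 < x)%N c.
  by apply/allP => x /mapP [i]; rewrite mem_iota add0n => /andP [_ /hpos h] ->.
exists (map (mat m k) (gen c)); split.
- rewrite map_inj_in_uniq ?uniq_gen // => w1 w2 /(gen_spec hall) [hs1 ha1 _ _ _]
    /(gen_spec hall) [hs2 _ _ _ _]; apply: mat_inj.
  + by rewrite hs1 sum_iota.
  + by rewrite hs2 sum_iota.
  + by rewrite size_map size_iota in ha1.
- move=> D; split.
  + move=> hX; have [w [hw ->]] := matB hm hpos hsum hX; apply: map_f; exact/(gen_spec hall).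
  + move=> /mapP [w /(gen_spec hall) hw ->]; exact: matA.
- by rewrite size_map (size_final (k := k)) //; case/andP: hm.
Qed.
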